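(* (ZFC) If $\kappa$ is a singular cardinal, then there is no minimal access ideal on $\kappa$. In particular, for the natural well-ordering $<$ of $\kappa$, $Seg(<)$ is not a minimal access ideal for $\kappa$; more precisely, for every preordering $\preccurlyeq$ of $\kappa$ there is a preordering $\preccurlyeq_1$ of $\kappa$ with $Seg(\preccurlyeq_1)\subsetneq Seg(\preccurlyeq)$.
   Context: An ideal on a set $X$ is a collection $\mathcal I$ of subsets of $X$ such that (i) $Y_1,Y_2\in\mathcal I\Rightarrow Y_1\cup Y_2\in\mathcal I$, (ii) $Y\in\mathcal I$, $Z\subseteq Y\Rightarrow Z\in\mathcal I$, (iii) $X\notin\mathcal I$. A preordering of $X$ is a reflexive, transitive, total binary relation $\preccurlyeq$ on $X$; throughout, all preorderings are assumed to have no last element. For $x\in X$ let ${\preccurlyeq_x}=\{y\in X:y\preccurlyeq x\}$. $Seg(\preccurlyeq)$ denotes the ideal of subsets $Y\subseteq X$ with $Y\subseteq{\preccurlyeq_x}$ for some $x\in X$. An ideal $\mathcal I$ on $X$ is an access ideal for $X$ if there is a preordering $\preccurlyeq$ of $X$ with $Seg(\preccurlyeq)\subseteq\mathcal I$. $\mathcal I$ is a minimal access ideal for $X$ if it is an access ideal for $X$ and for no ideal $\mathcal J\subsetneq\mathcal I$ is $\mathcal J$ an access ideal for $X$. *)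

(* Defs.v *)
From Stdlib Require Import Classical.

Section Defs.
Variable X : Type.

Definition family := (X -> Prop) -> Prop.

Definition subset (Y Z : X -> Prop) : Prop := forall x, Y x -> Z x.

Definition is_ideal (I : family) : Prop :=
  (forall Y1 Y2, I Y1 -> I Y2 -> I (fun x => Y1 x \/ Y2 x)) /\
  (forall Y Z, I Y -> subset Z Y -> I Z) /\
  ~ I (fun _ => True).

Definition is_preordering (le : X -> X -> Prop) : Prop :=
  (forall x, le x x) /\
  (forall x y z, le x y -> le y z -> le x z) /\
  (forall x y, le x y \/ le y x) /\
  (forall x, exists y, ~ le y x).

Definition Seg (le : X -> X -> Prop) : family :=
  fun Y => exists x, subset Y (fun y => le y x).

Definition fam_subset (J I : family) : Prop := forall Y, J Y -> I Y.
Definition fam_psubset (J I : family) : Prop :=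
  fam_subset J I /\ exists Y, I Y /\ ~ J Y.

Definition access_ideal (I : family) : Prop :=
  is_ideal I /\ exists le, is_preordering le /\ fam_subset (Seg le) I.

Definition minimal_access_ideal (I : family) : Prop :=
  access_ideal I /\ forall J, fam_psubset J I -> ~ access_ideal J.

Definition card_lt_X (A : X -> Prop) : Prop :=
  ~ exists f : X -> X, (forall x, A (f x)) /\ (forall x y, f x = f y -> x = y).

End Defs.

(* (X, lt) is an infinite cardinal kappa viewed as an initial ordinal with its
   natural well-ordering: lt is a strict well-order, X is infinite, and every
   proper initial segment has cardinality < |X|. *)
Definition infinite_cardinal_order (X : Type) (lt : X -> X -> Prop) : Prop :=
  (forall x, ~ lt x x) /\
  (forall x y z, lt x y -> lt y z -> lt x z) /\
  (forall x y, lt x y \/ x = y \/ lt y x) /\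
  well_founded lt /\
  (exists f : nat -> X, forall n m, f n = f m -> n = m) /\
  (forall x, card_lt_X X (fun y => lt y x)).

(* singular: cf(kappa) < kappa, i.e. some cofinal subset has size < kappa *)
Definition singular (X : Type) (lt : X -> X -> Prop) : Prop :=
  exists C : X -> Prop,
    (forall x, exists c, C c /\ (lt x c \/ x = c)) /\ card_lt_X X C.

(* Main.v *)
Require Import Defs.
From Stdlib Require Import Classical ClassicalEpsilon FunctionalExtensionality PropExtensionality.

Section EMB.
Variable X : Type.
Variable W : X -> X -> Prop.
Hypothesis Wwf : well_founded W.
Hypothesis Wtot : forall y z, y <> z -> W y z \/ W z y.
Variable S : X -> Prop.
Variable x0 : X.
Hypothesis HS : forall z (g : X -> X), (forall t, S t -> W (g t) z) ->
  (forall s t, S s -> S t -> g s = g t -> s = t) -> False.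

Definition emb_step (z : X) (rec : forall y, W y z -> X) : X :=
  epsilon (inhabits x0) (fun t => S t /\ forall y (p : W y z), rec y p <> t).

Definition emb_f : X -> X := Fix Wwf (fun _ => X) emb_step.

Lemma emb_f_eq z : emb_f z =
  epsilon (inhabits x0) (fun t => S t /\ forall y (p : W y z), emb_f y <> t).
Proof.
  unfold emb_f. rewrite Fix_eq. reflexivity.
  intros x g h E. unfold emb_step. f_equal. apply functional_extensionality; intro t.
  apply propositional_extensionality. split; intros [H1 H2]; split; auto;
  intros y p; [rewrite <- E | rewrite E]; auto.
Qed.

Lemma emb_spec z : S (emb_f z) /\ forall y, W y z -> emb_f y <> emb_f z.
Proof.
  assert (Hex : exists t, S t /\ forall y (p : W y z), emb_f y <> t).
  { apply NNPP; intro Hn.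
    apply (HS z (fun t => epsilon (inhabits x0) (fun y => W y z /\ emb_f y = t))).
    - intros t Ht.
      destruct (epsilon_spec (inhabits x0) (fun y => W y z /\ emb_f y = t)) as [H1 _];
        [| exact H1].
      apply NNPP; intro Hn2. apply Hn. exists t. split; auto. intros y p Heq.
      apply Hn2. exists y. auto.
    - intros s t Hs Ht Heq.
      assert (Es : exists y, W y z /\ emb_f y = s).
      { apply NNPP; intro Hn2. apply Hn. exists s. split; auto. intros y p Heq'.
        apply Hn2. exists y. auto. }
      assert (Et : exists y, W y z /\ emb_f y = t).
      { apply NNPP; intro Hn2. apply Hn. exists t. split; auto. intros y p Heq'.
        apply Hn2. exists y. auto. }
      destruct (epsilon_spec (inhabits x0) _ Es) as [_ H1].
      destruct (epsilon_spec (inhabits x0) _ Et) as [_ H2].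
      rewrite Heq in H1. congruence. }
  pose proof (epsilon_spec (inhabits x0) _ Hex) as [H1 H2].
  rewrite <- emb_f_eq in H1, H2. split; auto.
Qed.

Lemma emb_inj : exists f : X -> X, (forall x, S (f x)) /\ (forall x y, f x = f y -> x = y).
Proof.
  exists emb_f. split.
  - intro; apply emb_spec.
  - intros x y E. destruct (classic (x = y)) as [|n]; auto.
    destruct (Wtot x y n) as [h|h].
    + exfalso; exact (proj2 (emb_spec y) x h E).
    + exfalso; exact (proj2 (emb_spec x) y h (eq_sym E)).
Qed.
End EMB.

Section Core.
Variables (X : Type) (lt : X -> X -> Prop).
Hypothesis lt_tr : forall x y z, lt x y -> lt y z -> lt x z.
Hypothesis lt_tri : forall x y, lt x y \/ x = y \/ lt y x.
Hypothesis lt_wf : well_founded lt.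
Variable le : X -> X -> Prop.
Hypothesis le_refl : forall x, le x x.
Hypothesis le_trans : forall x y z, le x y -> le y z -> le x z.
Hypothesis le_tot : forall x y, le x y \/ le y x.
Hypothesis le_nl : forall x, exists y, ~ le y x.

Lemma wf_min (P : X -> Prop) : (exists y, P y) -> exists k, P k /\ forall y, lt y k -> ~ P y.
Proof.
  intros [y Hy]. apply NNPP; intro Hn. revert Hy.
  induction y as [z IH] using (well_founded_ind lt_wf). intro Pz.
  apply Hn. exists z. split; [exact Pz|]. intros y0 Hy0 Py0. exact (IH y0 Hy0 Py0).
Qed.

Definition recd k := forall y, lt y k -> ~ le k y.

Lemma rec_mono k k' : recd k' -> lt k k' -> le k k'.
Proof. intros H Hl. destruct (le_tot k k') as [h|h]; [exact h | exfalso; exact (H k Hl h)]. Qed.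

Definition sig (z : X) : X := epsilon (inhabits z)
  (fun k => (recd k /\ le z k) /\ forall k', lt k' k -> ~ (recd k' /\ le z k')).

Lemma sig_spec z : recd (sig z) /\ le z (sig z).
Proof.
  unfold sig. apply (epsilon_spec (inhabits z) (fun k => (recd k /\ le z k) /\ _)).
  apply wf_min.
  destruct (wf_min (fun y => ~ le y z)) as [k [Hk Hm]]; [apply le_nl|].
  exists k. split.
  - intros y Hy Hky. apply Hk. apply (le_trans _ y); auto.
    apply NNPP. intro H. exact (Hm y Hy H).
  - destruct (le_tot z k); auto. contradiction.
Qed.

Definition Wr y z := lt (sig y) (sig z) \/ (sig y = sig z /\ lt y z).

Lemma Wr_wf : well_founded Wr.
Proof.
  intro z. remember (sig z) as a eqn:Ha. revert z Ha.
  induction a as [a IHa] using (well_founded_ind lt_wf).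
  intro z; induction z as [z IHz] using (well_founded_ind lt_wf). intro Ha.
  constructor. intros y [Hy|[Hy1 Hy2]].
  - apply (IHa (sig y)); [subst; auto | reflexivity].
  - apply IHz; auto; congruence.
Qed.

Lemma Wr_tot y z : y <> z -> Wr y z \/ Wr z y.
Proof.
  intro n. unfold Wr. destruct (lt_tri (sig y) (sig z)) as [h|[h|h]]; auto.
  destruct (lt_tri y z) as [h'|[h'|h']]; auto; contradiction.
Qed.

Lemma Wr_bound y z : Wr y z -> le y (sig z).
Proof.
  intros [h|[h1 h2]].
  - apply (le_trans _ (sig y)); [apply sig_spec|]. apply rec_mono; auto. apply sig_spec.
  - rewrite <- h1. apply sig_spec.
Qed.

Hypothesis Hseg : forall x, card_lt_X X (fun y => lt y x).
Variable C : X -> Prop.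
Hypothesis HC1 : forall x, exists c, C c /\ (lt x c \/ x = c).
Hypothesis HC2 : card_lt_X X C.
Variable x00 : X.

Lemma core : exists x0 (F : X -> X), forall w, exists y, le y x0 /\ ~ le (F y) w.
Proof.
  apply NNPP; intro Hn.
  assert (N : forall x0 (F:X->X), exists w, forall y, le y x0 -> le (F y) w).
  { intros x0 F. apply NNPP; intro H. apply Hn. exists x0, F. intro w.
    apply NNPP; intro H'. apply H. exists w. intros y Hy. apply NNPP; intro H''.
    apply H'. exists y; auto. }
  assert (NI : forall (S : X -> Prop) (b : X -> X) x0 (g : X -> X),
     (forall w, exists s, S s /\ ~ le (b s) w) -> (forall s, S s -> le (g s) x0) ->
     (forall s t, S s -> S t -> g s = g t -> s = t) -> False).
  { intros S b x0 g Hc Hg Hi.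
    destruct (N x0 (fun y => b (epsilon (inhabits x0) (fun s => S s /\ g s = y)))) as [w Hw].
    destruct (Hc w) as [s [Hs Hb]]. specialize (Hw (g s) (Hg s Hs)). simpl in Hw.
    destruct (epsilon_spec (inhabits x0) (fun s' => S s' /\ g s' = g s)) as [H1 H2];
      [eauto|].
    rewrite (Hi _ _ H1 Hs H2) in Hw. contradiction. }
  assert (Key : forall S b, (forall w, exists s, S s /\ ~ le (b s) w) -> card_lt_X X S -> False).
  { intros S b Hc Hcard. apply Hcard.
    apply (emb_inj X Wr Wr_wf Wr_tot S x00).
    intros z g Hg Hi. apply (NI S b (sig z) g Hc); auto.
    intros s Hs. apply Wr_bound. auto. }
  destruct (classic (exists xs, forall w, exists y, lt y xs /\ ~ le y w)) as [[xs Hxs]|HA].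
  - apply (Key (fun y => lt y xs) (fun y => y)); auto.
  - assert (HB : forall x, exists m, forall y, lt y x \/ y = x -> le y m).
    { intro x. assert (exists w, forall y, lt y x -> le y w) as [w Hw].
      { apply NNPP; intro H. apply HA. exists x. intro w. apply NNPP; intro H'.
        apply H. exists w. intros y Hy. apply NNPP; intro H''. apply H'. exists y; auto. }
      destruct (le_tot x w) as [h|h].
      - exists w. intros y [Hy|Hy]; auto. subst; auto.
      - exists x. intros y [Hy|Hy]; [apply (le_trans _ w); auto | subst; auto]. }
    apply (Key C (fun c => epsilon (inhabits c) (fun m => forall y, lt y c \/ y = c -> le y m)));
      auto.
    intro w. destruct (le_nl w) as [y Hy]. destruct (HC1 y) as [c [Hc Hyc]].
    exists c. split; auto. intro Hbw. apply Hy.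
    pose proof (epsilon_spec (inhabits c) (fun m => forall y, lt y c \/ y = c -> le y m) (HB c))
      as Hsp.
    apply (le_trans _ _ _ (Hsp y Hyc) Hbw).
Qed.
End Core.

Lemma Seg_ideal (X : Type) (le : X -> X -> Prop) :
  is_preordering X le -> is_ideal X (Seg X le).
Proof.
  intros [Hr [Ht [Hto Hnl]]]. split; [|split].
  - intros Y1 Y2 [a Ha] [b Hb]. destruct (Hto a b) as [h|h].
    + exists b. intros y [Hy|Hy]; [apply (Ht _ a); auto | auto].
    + exists a. intros y [Hy|Hy]; [auto | apply (Ht _ b); auto].
  - intros Y Z [a Ha] HZ. exists a. intros y Hy. auto.
  - intros [a Ha]. destruct (Hnl a) as [y Hy]. apply Hy. apply Ha. exact I.
Qed.

Lemma part3 (X : Type) (lt : X -> X -> Prop)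
  (Hcard : infinite_cardinal_order X lt) (Hsing : singular X lt)
  (le : X -> X -> Prop) (Hle : is_preordering X le) :
  exists le1, is_preordering X le1 /\ fam_psubset X (Seg X le1) (Seg X le).
Proof.
  destruct Hcard as [Hirr [Htr [Htri [Hwf [[f0 _] Hseg]]]]].
  destruct Hsing as [C [HC1 HC2]].
  pose proof Hle as [Hr [Ht [Hto Hnl]]].
  destruct (core X lt Htri Hwf le Hr Ht Hto Hnl Hseg C HC1 HC2 (f0 O)) as [x0 [F HF]].
  set (M := fun y => if excluded_middle_informative (le y (F y)) then F y else y).
  assert (HM : forall y, le y (M y) /\ le (F y) (M y)).
  { intro y. unfold M. destruct (excluded_middle_informative (le y (F y))) as [h|h].
    - split; auto.
    - split; auto. destruct (Hto y (F y)); tauto. }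
  exists (fun y z => le (M y) (M z)). split; [split; [|split; [|split]]|split].
  - intro; auto.
  - intros x y z; apply Ht.
  - intros x y; apply Hto.
  - intro x. destruct (Hnl (M x)) as [y Hy]. exists y. intro H. apply Hy.
    apply (Ht _ (M y)); auto. apply HM.
  - intros Y [x Hx]. exists (M x). intros y Hy. apply (Ht _ (M y)); auto. apply HM.
  - exists (fun y => le y x0). split.
    + exists x0. intros y Hy; auto.
    + intros [z Hz]. destruct (HF (M z)) as [y [Hy HFy]]. apply HFy.
      apply (Ht _ (M y)); [apply HM | apply Hz; auto].
Qed.

Theorem theorem2p11 (X : Type) (lt : X -> X -> Prop)
  (Hcard : infinite_cardinal_order X lt) (Hsing : singular X lt) :
  (forall I : family X, ~ minimal_access_ideal X I) /\
  ~ minimal_access_ideal X (Seg X (fun x y => ~ lt y x)) /\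
  (forall le : X -> X -> Prop, is_preordering X le ->
     exists le1 : X -> X -> Prop, is_preordering X le1 /\
       fam_psubset X (Seg X le1) (Seg X le)).
Proof.
  assert (P1 : forall I : family X, ~ minimal_access_ideal X I).
  { intros I [[HI [le [Hle Hsub]]] Hmin].
    destruct (part3 X lt Hcard Hsing le Hle) as [le1 [Hle1 [Hs [Y [HY HnY]]]]].
    apply (Hmin (Seg X le1)).
    - split.
      + intros Z HZ. apply Hsub, Hs, HZ.
      + exists Y. split; auto.
    - split; [apply Seg_ideal; auto|]. exists le1. split; auto. intros Z HZ; exact HZ. }
  split; [exact P1|split; [apply P1|]].
  intros le Hle. exact (part3 X lt Hcard Hsing le Hle).
Qed.
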